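(* There is a polynomial $\mathit{pol}$, independent of $\langle\mathcal{I},\eta\rangle$ (depending only on the fixed database schema), such that if a database with integrity constraints $\langle\mathcal{I},\eta\rangle$ (in the setting described below) is consistent, then it has a possible world $V$ with $\mathit{size}(V)=O(\mathit{pol}(\mathit{size}(\mathcal{I})+\mathit{size}(\eta)))$.
   Context: Constants: $\mathit{Dom}=\{\bot,1,2,\dots\}$ with $\bot$ the null value, $\mathit{Dom}_d=\{1,2,\dots\}$ (integers written in binary/decimal); the only built-in relations are $=$ and $\le$. The set of base predicate symbols (number and arities) is fixed. $\mathit{size}(\cdot)$ is the size of the representation. Facts are ground atoms; definite facts contain no $\bot$. For tuples, $t\preceq t'$ if each $t_i=t'_i$ or $t_i=\bot$; $a\approx b$ if some $s$ has $a\preceq s,b\preceq s$. For a set $S$ of facts: $S^\Downarrow=\{a:\exists b\in S,a\preceq b\}$, $S^\Uparrow=\{a:\exists b\in S,b\preceq a\}$, $S^\approx=\{a:\exists b\in S,b\approx a\}$, $S^\sim=S^\approx\setminus S^\Downarrow$. A database is $\mathcal{I}=\langle D,E\rangle$, $D,E$ finite sets of base facts; $\mathcal{I}_t=D^\Downarrow$, $\mathcal{I}_u=D^\sim\setminus E^\Uparrow$; a possible world of $\mathcal{I}$ is a set $W$ of definite facts with $\mathcal{I}_t\subseteq W^\Downarrow$ and $W\subseteq\mathcal{I}_t\cup\mathcal{I}_u$. Integrity constraints have the form $\exists X\,\forall Y\,(A_1\wedge\dots\wedge A_k\rightarrow B_1\vee\dots\vee B_m)$, atoms without $\bot$ over base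 and built-in predicates, every variable in $X\cup Y$ and occurring in some base-predicate $A_i$. A possible world of $\langle\mathcal{I},\eta\rangle$ is a possible world of $\mathcal{I}$ satisfying every constraint of $\eta$ (as an interpretation with domain $\mathit{Dom}_d$); $\langle\mathcal{I},\eta\rangle$ is consistent if one exists. *)

(* Defs.v *)
From Stdlib Require List.
From mathcomp Require Import all_boot.
Set Implicit Arguments. Unset Strict Implicit. Unset Printing Implicit Defensive.

(** Constants: Dom = nat, where 0 encodes the null value ⊥ and every
    n > 0 is the integer n (Dom_d = positive nats). *)
Definition null : nat := 0.

(** Schema: [np] base predicate symbols 0..np-1, with arity [ar p]. *)

Definition fact := (nat * seq nat)%type.

Definition wf_fact (np : nat) (ar : nat -> nat) (f : fact) : Prop :=
  f.1 < np /\ size f.2 = ar f.1.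

Definition definite (f : fact) : Prop := forall c, c \in f.2 -> c != null.

Definition prec (a b : fact) : Prop :=
  a.1 = b.1 /\ size a.2 = size b.2 /\
  forall i, i < size a.2 -> nth null a.2 i = nth null b.2 i \/ nth null a.2 i = null.

Definition approxf (a b : fact) : Prop := exists s, prec a s /\ prec b s.

Definition fset_ := fact -> Prop.
Definition down (S : fset_) : fset_ := fun a => exists2 b, S b & prec a b.
Definition up (S : fset_) : fset_ := fun a => exists2 b, S b & prec b a.
Definition approxs (S : fset_) : fset_ := fun a => exists2 b, S b & approxf b a.
Definition sims (S : fset_) : fset_ := fun a => approxs S a /\ ~ down S a.

Definition of_seq (s : seq fact) : fset_ := fun a => a \in s.

Definition It (D : seq fact) : fset_ := down (of_seq D).
Definition Iu (D E : seq fact) : fset_ :=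
  fun a => sims (of_seq D) a /\ ~ up (of_seq E) a.

Definition possible_world (D E : seq fact) (W : fset_) : Prop :=
  (forall a, W a -> definite a) /\
  (forall a, It D a -> down W a) /\
  (forall a, W a -> It D a \/ Iu D E a).

(** Integrity constraints  ∃X ∀Y (A1 ∧ … ∧ Ak → B1 ∨ … ∨ Bm).
    Variables are numbered: 0..nx-1 are the existential ones (X),
    nx..nx+ny-1 the universal ones (Y). *)
Inductive term := TVar of nat | TConst of nat.
Inductive atom :=
  | ABase of nat & seq term
  | AEq of term & term
  | ALe of term & term.

Record ic := IC { ic_nx : nat; ic_ny : nat; ic_body : seq atom; ic_head : seq atom }.

Definition term_ok (nv : nat) (t : term) : Prop :=
  match t with TVar i => i < nv | TConst c => 0 < c end.

Definition atom_ok (np : nat) (ar : nat -> nat) (nv : nat) (a : atom) : Prop :=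
  match a with
  | ABase p ts => p < np /\ size ts = ar p /\ forall t, Stdlib.Lists.List.In t ts -> term_ok nv t
  | AEq s t | ALe s t => term_ok nv s /\ term_ok nv t
  end.

Definition is_base (a : atom) : bool := if a is ABase _ _ then true else false.

Definition atom_has_var (i : nat) (a : atom) : Prop :=
  match a with ABase _ ts => Stdlib.Lists.List.In (TVar i) ts | _ => False end.

Definition wf_ic (np : nat) (ar : nat -> nat) (c : ic) : Prop :=
  let nv := ic_nx c + ic_ny c in
  (forall a, Stdlib.Lists.List.In a (ic_body c ++ ic_head c) -> atom_ok np ar nv a) /\
  (forall i, i < nv -> exists2 a, Stdlib.Lists.List.In a (ic_body c) & atom_has_var i a).

Definition teval (v : nat -> nat) (t : term) : nat :=
  match t with TVar i => v i | TConst c => c end.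

Definition aholds (W : fset_) (v : nat -> nat) (a : atom) : Prop :=
  match a with
  | ABase p ts => W (p, map (teval v) ts)
  | AEq s t => teval v s = teval v t
  | ALe s t => teval v s <= teval v t
  end.

Definition sat_ic (W : fset_) (c : ic) : Prop :=
  exists ex : nat -> nat, (forall i, i < ic_nx c -> 0 < ex i) /\
  forall un : nat -> nat, (forall i, 0 < un i) ->
    let v := fun i => if i < ic_nx c then ex i else un i in
    (forall a, Stdlib.Lists.List.In a (ic_body c) -> aholds W v a) ->
    exists2 a, Stdlib.Lists.List.In a (ic_head c) & aholds W v a.

Definition possible_world_ic (D E : seq fact) (eta : seq ic) (W : fset_) : Prop :=
  possible_world D E W /\ forall c, Stdlib.Lists.List.In c eta -> sat_ic W c.

Definition consistent (D E : seq fact) (eta : seq ic) : Prop :=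
  exists W, possible_world_ic D E eta W.

Definition nsize (n : nat) : nat := (trunc_log 2 n).+1.
Definition fact_size (f : fact) : nat := (nsize f.1 + sumn (map nsize f.2)).+1.
Definition facts_size (s : seq fact) : nat := sumn (map fact_size s).
Definition db_size (D E : seq fact) : nat := facts_size D + facts_size E.
Definition term_size (t : term) : nat :=
  match t with TVar i => (nsize i).+1 | TConst c => (nsize c).+1 end.
Definition atom_size (a : atom) : nat :=
  match a with
  | ABase p ts => (nsize p + sumn (map term_size ts)).+1
  | AEq s t | ALe s t => (term_size s + term_size t).+1
  end.
Definition ic_size (c : ic) : nat :=
  (ic_nx c + ic_ny c + sumn (map atom_size (ic_body c))
     + sumn (map atom_size (ic_head c))).+1.
Definition eta_size (eta : seq ic) : nat := sumn (map ic_size eta).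

(** Polynomials with natural coefficients (low degree first). *)
Definition peval (p : seq nat) (n : nat) : nat := foldr (fun c acc => c + n * acc) 0 p.

(* Main.v *)
Require Import Defs.
From Stdlib Require List.
From mathcomp Require Import all_boot zify.
From Stdlib Require Import ClassicalEpsilon.
Set Implicit Arguments. Unset Strict Implicit.

Definition rho (B : nat) (dom : seq nat) (x : nat) : nat :=
  if x <= B then x else B + count (fun y => (B < y) && (y <= x)) dom.

Lemma rho_fix B dom x : x <= B -> rho B dom x = x.
Proof. by rewrite /rho => ->. Qed.

Lemma rho_lt B dom x y : x < y -> y \in dom -> rho B dom x < rho B dom y.
Proof.
move=> xy yd; rewrite /rho.
case: (leqP y B) => yB.
  by rewrite (leq_trans (ltnW xy) yB).
have cnt : 0 < count (fun z => (B < z) && (z <= y)) dom.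
  by rewrite -has_count; apply/hasP; exists y => //; rewrite yB leqnn.
case: (leqP x B) => xB.
  by rewrite (leq_ltn_trans xB) // -[X in X < _]addn0 ltn_add2l.
rewrite ltn_add2l.
have := count_predUI (fun z => (B < z) && (z <= x)) (fun z => (x < z) && (z <= y)) dom.
have -> : count (predI (fun z => (B < z) && (z <= x)) (fun z => (x < z) && (z <= y))) dom = 0.
  apply/eqP; rewrite -leqn0 leqNgt -has_count; apply/hasP => -[z _] /=.
  by case/andP=> /andP[_ h1] /andP[h2 _]; move: (leq_ltn_trans h1 h2); rewrite ltnn.
have -> : count (predU (fun z => (B < z) && (z <= x)) (fun z => (x < z) && (z <= y))) dom
   = count (fun z => (B < z) && (z <= y)) dom.
  apply: eq_count => z /=.
  case: (leqP z x) => zx; rewrite ?andbT ?andbF ?orbF /=.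
    by rewrite (leq_trans zx (ltnW xy)) andbT.
  by rewrite (ltn_trans xB zx) /=.
rewrite addn0 => ->.
rewrite -[X in X < _]addn0 ltn_add2l -has_count; apply/hasP; exists y => //=.
by rewrite xy leqnn.
Qed.

Lemma rho_inj B dom x y : x \in dom -> y \in dom -> rho B dom x = rho B dom y -> x = y.
Proof.
move=> xd yd e; case: (ltngtP x y) => // h.
  by move: (rho_lt B h yd); rewrite e ltnn.
by move: (rho_lt B h xd); rewrite e ltnn.
Qed.

Lemma rho_le B dom x y : x \in dom -> y \in dom -> (rho B dom x <= rho B dom y) = (x <= y).
Proof.
move=> xd yd; case: (ltngtP x y) => h.
- by rewrite ltnW // rho_lt.
- by apply/negbTE; rewrite -ltnNge rho_lt.
- by rewrite h leqnn.
Qed.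

Lemma rho_pos B dom x : x \in dom -> 0 < x -> 0 < rho B dom x.
Proof.
move=> xd x0; rewrite /rho; case: (leqP x B) => // xB.
rewrite addn_gt0 -has_count; apply/orP; right; apply/hasP; exists x => //.
by rewrite xB leqnn.
Qed.

Lemma rho_bound B dom x : rho B dom x <= B + size dom.
Proof.
rewrite /rho; case: (leqP x B) => xB; first exact: leq_trans xB (leq_addr _ _).
by rewrite leq_add2l count_size.
Qed.

Definition ren B dom (f : fact) : fact := (f.1, map (rho B dom) f.2).

Lemma nth_ren B dom (s : seq nat) i : i < size s ->
  nth null (map (rho B dom) s) i = rho B dom (nth null s i).
Proof. by move=> h; rewrite (nth_map null). Qed.

Lemma prec_refl a : prec a a.
Proof. by split=> //; split=> // i _; left. Qed.

Lemma prec_trans a b c : prec a b -> prec b c -> prec a c.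
Proof.
move=> [e1 [s1 h1]] [e2 [s2 h2]]; split; first by rewrite e1.
split; first by rewrite s1.
move=> i hi; case: (h1 i hi) => [->|->]; last by right.
by apply: h2; rewrite -s1.
Qed.

Lemma prec_def_eq f s : definite f -> prec f s -> s = f.
Proof.
move=> df [e1 [s1 h]]; case: f s df e1 s1 h => p t [q u] /= df e1 s1 h.
subst q; congr pair; apply: (@eq_from_nth _ null) => // i hi.
rewrite -s1 in hi; case: (h i hi) => // e.
by move: (df _ (mem_nth null hi)); rewrite e.
Qed.

Lemma ren_fix B dom f : (forall x, x \in f.2 -> x <= B) -> ren B dom f = f.
Proof.
case: f => p t /= h; rewrite /ren /=; congr pair; apply: map_id_in => x xt.
by rewrite rho_fix // h.
Qed.

Lemma prec_ren B dom b f :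
  (forall x, x \in b.2 -> x <= B /\ (x != 0 -> x \in dom)) ->
  (forall x, x \in f.2 -> x \in dom) ->
  prec b f <-> prec b (ren B dom f).
Proof.
move=> hb hf; rewrite /prec /ren /= size_map; split.
  move=> [e1 [s1 h]]; split=> //; split=> // i hi.
  rewrite nth_ren -?s1 //; case: (h i hi) => e; last by right.
  left; rewrite -e rho_fix //; case: (hb (nth null b.2 i)) => //.
  exact: mem_nth.
move=> [e1 [s1 h]]; split=> //; split=> // i hi.
have hi' : i < size f.2 by rewrite -s1.
case: (h i hi) => e; last by right.
rewrite nth_ren // in e.
have [bB bd] := hb _ (mem_nth null hi).
case: (eqVneq (nth null b.2 i) 0) => b0; first by right.
left; apply: (rho_inj (B:=B) (bd b0) (hf _ (mem_nth null hi'))).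
by rewrite -e rho_fix.
Qed.

Lemma ren_definite B dom f : (forall x, x \in f.2 -> x \in dom) -> definite f ->
  definite (ren B dom f).
Proof.
move=> hf df c /mapP [x xt ->]; rewrite -lt0n rho_pos ?hf // lt0n.
exact: df.
Qed.

Definition dec (P : Prop) : bool := if excluded_middle_informative P then true else false.
Lemma dec_spec P : dec P = true <-> P.
Proof. by rewrite /dec; case: excluded_middle_informative. Qed.

Fixpoint tup (d : seq nat) (k : nat) : seq (seq nat) :=
  if k is k'.+1 then [seq x :: t | x <- d, t <- tup d k'] else [:: [::]].

Lemma mem_tup d k t : (t \in tup d k) = (size t == k) && all (mem d) t.
Proof.
elim: k t => [|k IH] t; first by case: t.
case: t => [|x t] /=.
  by apply/negbTE/allpairsPdep => -[y [u [_ _]]].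
apply/allpairsPdep/idP.
  by move=> [y [u [yd ut [-> ->]]]]; rewrite yd -IH ut.
move=> /andP [sz /andP [xd at_]]; exists x, t; split=> //.
by rewrite IH; rewrite eqSS in sz; rewrite sz at_.
Qed.

Lemma size_tup d k : size (tup d k) = size d ^ k.
Proof.
elim: k => [|k IH] //=; rewrite size_allpairs_dep expnS.
rewrite IH; move: (size d ^ k) => c; elim: d {IH} => //= x d ->.
by rewrite mulSn.
Qed.

Definition allfacts np ar dom : seq fact :=
  [seq (p, t) | p <- iota 0 np, t <- tup dom (ar p)].

Lemma mem_allfacts np ar dom f :
  f \in allfacts np ar dom <-> [/\ f.1 < np, size f.2 = ar f.1 & forall x, x \in f.2 -> x \in dom].
Proof.
split.
  move/allpairsPdep => [p [t [pn tt ->]]] /=; rewrite mem_iota /= in pn.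
  rewrite mem_tup in tt; case/andP: tt => /eqP sz /allP al; split=> //.
case: f => p t /= [pn sz al]; apply/allpairsPdep; exists p, t; split=> //.
  by rewrite mem_iota.
by rewrite mem_tup sz eqxx /=; apply/allP.
Qed.

Definition rhoinv B dom y := nth 0 dom (find (fun x => rho B dom x == y) dom).

Lemma rhoinvP B dom y : y \in map (rho B dom) dom ->
  rhoinv B dom y \in dom /\ rho B dom (rhoinv B dom y) = y.
Proof.
move=> /mapP [x xd ->].
have h : has (fun z => rho B dom z == rho B dom x) dom by apply/hasP; exists x.
split; first by rewrite /rhoinv mem_nth // -has_find.
by apply/eqP; exact: (nth_find 0 h).
Qed.

Lemma map_rho_inj B dom s1 s2 : (forall x, x \in s1 -> x \in dom) ->
  (forall x, x \in s2 -> x \in dom) -> map (rho B dom) s1 = map (rho B dom) s2 -> s1 = s2.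
Proof.
elim: s1 s2 => [|x s1 IH] [|y s2] //= h1 h2 [e es].
have xy : x = y := rho_inj (h1 _ (mem_head _ _)) (h2 _ (mem_head _ _)) e.
rewrite xy (IH s2) // => z zs; [apply: h1|apply: h2]; by rewrite in_cons zs orbT.
Qed.

Lemma map_ext_In A (T : Type) (f g : A -> T) s :
  (forall t, List.In t s -> f t = g t) -> map f s = map g s.
Proof. elim: s => //= x s IH h; rewrite h ?IH //; [move=> t ht; apply: h|]; tauto. Qed.

Lemma mem_map_In A (f : A -> nat) s y : y \in map f s -> exists t, List.In t s /\ y = f t.
Proof.
elim: s => //= x s IH; rewrite in_cons => /orP [/eqP ->|/IH [t [ts ->]]].
  by exists x; split=> //; left.
by exists t; split=> //; right.
Qed.

Lemma In_mem_map A (f : A -> nat) s t : List.In t s -> f t \in map f s.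
Proof.
elim: s => //= x s IH [->|h]; first by rewrite mem_head.
by rewrite in_cons IH ?orbT.
Qed.

Lemma In_cat A (x : A) s1 s2 : List.In x (s1 ++ s2) <-> List.In x s1 \/ List.In x s2.
Proof. elim: s1 => /= [|y s1 IH]; [tauto|rewrite IH; tauto]. Qed.

Definition atom_terms (a : atom) : seq term :=
  match a with ABase _ ts => ts | AEq s t | ALe s t => [:: s; t] end.

Definition sat_with (W : fset_) (c : ic) (ex : nat -> nat) : Prop :=
  (forall i, i < ic_nx c -> 0 < ex i) /\
  forall un : nat -> nat, (forall i, 0 < un i) ->
    let v := fun i => if i < ic_nx c then ex i else un i in
    (forall a, List.In a (ic_body c) -> aholds W v a) ->
    exists2 a, List.In a (ic_head c) & aholds W v a.

Lemma atom_ok_terms np ar nv a : atom_ok np ar nv a ->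
  forall t, List.In t (atom_terms a) -> term_ok nv t.
Proof.
case: a => [p ts|s t|s t] /=; first by case=> _ [_ h].
all: by move=> [h1 h2] u [<-|[<-|[]]].
Qed.

Lemma construction np ar D E eta W B dom (cov : fact -> fact) (exf : ic -> nat -> nat) :
  (forall f, f \in D -> wf_fact np ar f) ->
  (forall c, List.In c eta -> wf_ic np ar c) ->
  possible_world D E W ->
  (forall c, List.In c eta -> sat_with W c (exf c)) ->
  (forall b, b \in D -> W (cov b) /\ prec b (cov b) /\ forall x, x \in (cov b).2 -> x \in dom) ->
  (forall c i, List.In c eta -> i < ic_nx c -> exf c i \in dom) ->
  (forall b, b \in D ++ E -> forall x, x \in b.2 -> x <= B /\ (x != 0 -> x \in dom)) ->
  (forall c, List.In c eta -> forall a, List.In a (ic_body c ++ ic_head c) ->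
     forall k, List.In (TConst k) (atom_terms a) -> k <= B /\ k \in dom) ->
  (forall x, x \in dom -> 0 < x) ->
  possible_world_ic D E eta
    (of_seq (map (ren B dom) (filter (fun f => dec (W f)) (allfacts np ar dom)))).
Proof.
move=> wfD wfeta [Wdef [Wcov Wsub]] Hex Hcov Hexd HDE Hcst Hpos.
set V := filter _ _.
have inV : forall a, a \in map (ren B dom) V <-> exists f, [/\ W f, f.1 < np,
    size f.2 = ar f.1, (forall x, x \in f.2 -> x \in dom) & a = ren B dom f].
  move=> a; split.
    move/mapP => [f]; rewrite mem_filter => /andP [/dec_spec Wf /mem_allfacts [h1 h2 h3]] ->.
    by exists f.
  move=> [f [Wf h1 h2 h3 ->]]; apply/mapP; exists f => //.
  by rewrite mem_filter; apply/andP; split; [apply/dec_spec | apply/mem_allfacts].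
have HD : forall b, b \in D -> forall x, x \in b.2 -> x <= B /\ (x != 0 -> x \in dom).
  by move=> b bD; apply: HDE; rewrite mem_cat bD.
have HE : forall b, b \in E -> forall x, x \in b.2 -> x <= B /\ (x != 0 -> x \in dom).
  by move=> b bE; apply: HDE; rewrite mem_cat bE orbT.
split; first split.
- move=> a /inV [f [Wf _ _ fd ->]]; exact: ren_definite fd (Wdef _ Wf).
- split.
  + move=> a [b bD ab].
    have [Wc [bc cd]] := Hcov b bD.
    have [b1 bsz] := wfD b bD.
    exists (ren B dom (cov b)).
      apply/inV; exists (cov b); split=> //.
      * by case: bc => <-.
      * by case: bc => e [s _]; rewrite -e -s.
    apply: prec_trans ab _; exact/(prec_ren (HD b bD) cd).
  + move=> a /inV [f [Wf _ _ fd ->]].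
    have fd' := Wdef _ Wf.
    case: (Wsub f Wf) => [[b bD fb]|[[[b bD bf] ndf] nuf]].
    * left; have e := prec_def_eq fd' fb; subst b.
      rewrite ren_fix; first by exists f => //; exact: prec_refl.
      by move=> x xf; case: (HD f bD x xf).
    * right.
      have bf' : prec b f.
        by case: bf => s [bs fs]; rewrite -(prec_def_eq fd' fs).
      split; first split.
      -- exists b => //; exists (ren B dom f); split; [exact/(prec_ren (HD b bD) fd) | exact: prec_refl].
      -- move=> [b' b'D rb'].
         have e := prec_def_eq (ren_definite fd fd') rb'.
         have h : prec b' f by apply/(prec_ren (HD b' b'D) fd); rewrite e; exact: prec_refl.
         have b'd : definite b' by rewrite e; exact: ren_definite.
         apply: ndf; exists b' => //; rewrite (prec_def_eq b'd h); exact: prec_refl.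
      -- move=> [e eE er]; apply: nuf; exists e => //; exact/(prec_ren (HE e eE) fd).
- move=> c ceta; have [expos Hsat] := Hex c ceta.
  have [Hok Hvars] := wfeta c ceta.
  exists (fun i => rho B dom (exf c i)); split.
    move=> i hi; apply: rho_pos; [exact: Hexd | exact: expos].
  move=> un' Hun' v' Hb'.
  pose un i := if un' i \in map (rho B dom) dom then rhoinv B dom (un' i) else 1.
  have Hun : forall i, 0 < un i.
    move=> i; rewrite /un; case: ifP => // h; apply: Hpos; exact: (rhoinvP h).1.
  pose v := fun i => if i < ic_nx c then exf c i else un i.
  have Hsat' : (forall a, List.In a (ic_body c) -> aholds W v a) ->
      exists2 a, List.In a (ic_head c) & aholds W v a := Hsat un Hun.
  have Claim1 : forall i, i < ic_nx c + ic_ny c -> v i \in dom /\ rho B dom (v i) = v' i.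
    move=> i hi; rewrite /v /v'; case: ifP => hx; first by split=> //; exact: Hexd.
    have [a aB ha] := Hvars i hi.
    case: a aB ha => // p ts aB ha.
    have := Hb' _ aB; rewrite /= => /inV [f [_ _ _ fd e]].
    have h : un' i \in map (rho B dom) dom.
      have := In_mem_map (teval v') ha; rewrite /= /v' hx.
      rewrite /ren in e; case: e => _ -> /mapP [x xf ->].
      by apply: map_f; apply: fd.
    by rewrite /un h; exact: rhoinvP h.
  have Ht : forall a, List.In a (ic_body c ++ ic_head c) -> forall t, List.In t (atom_terms a) ->
      teval v t \in dom /\ rho B dom (teval v t) = teval v' t.
    move=> a aH t ht.
    have tok := atom_ok_terms (Hok a aH) ht.
    case: t ht tok => [i|k] ht /= tok; first exact: Claim1.
    have [kB kd] := Hcst c ceta a aH k ht.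
    by rewrite rho_fix.
  have Hbody : forall a, List.In a (ic_body c) -> aholds W v a.
    move=> a aB; have Ha := Ht a (proj2 (In_cat _ _ _) (or_introl aB)).
    have := Hb' a aB.
    case: a aB Ha => [p ts|s t|s t] aB Ha /=.
    + move/inV => [[q u] [Wf _ _ fd e]].
      rewrite /ren /= in e; case: e => e1 e2; subst q.
      suff -> : map (teval v) ts = u by [].
      apply: (map_rho_inj (B:=B) (dom:=dom)) => //.
        by move=> x /mem_map_In [t [tt ->]]; exact: (Ha t tt).1.
      by rewrite -e2 -map_comp; apply: map_ext_In => t tt; exact: (Ha t tt).2.
    + have [ds es] := Ha s (or_introl erefl); have [dt et] := Ha t (or_intror (or_introl erefl)).
      by rewrite -es -et => e; exact: rho_inj ds dt e.
    + have [ds es] := Ha s (or_introl erefl); have [dt et] := Ha t (or_intror (or_introl erefl)).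
      by rewrite -es -et rho_le.
  have [a aH ha] := Hsat' Hbody.
  exists a => //.
  have aH' : List.In a (ic_body c ++ ic_head c) by apply/In_cat; right.
  have Ha := Ht a aH'.
  case: a aH ha aH' Ha => [p ts|s t|s t] aH ha aH' Ha /=.
  + have [pn [sz _]] := Hok _ aH'.
    apply/inV; exists (p, map (teval v) ts); split=> //=.
    * by rewrite size_map.
    * by move=> x /mem_map_In [t [tt ->]]; exact: (Ha t tt).1.
    * rewrite /ren /= -map_comp; congr pair; apply: map_ext_In => t tt.
      by rewrite /= (Ha t tt).2.
  + have [ds es] := Ha s (or_introl erefl); have [dt et] := Ha t (or_intror (or_introl erefl)).
    by rewrite -es -et /= ha.
  + have [ds es] := Ha s (or_introl erefl); have [dt et] := Ha t (or_intror (or_introl erefl)).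
    by rewrite -es -et rho_le.
Qed.

Lemma In_mem (T : eqType) (y : T) s : List.In y s -> y \in s.
Proof. elim: s => //= x s IH [->|h]; first by rewrite mem_head. by rewrite in_cons IH ?orbT. Qed.

Lemma flat_mem A (g : A -> seq nat) s y x : List.In y s -> x \in g y -> x \in flatten (map g s).
Proof.
elim: s => //= z s IH [->|h] hx; rewrite mem_cat ?hx //.
by rewrite IH ?orbT.
Qed.

Lemma flat_mem' (A : eqType) (g : A -> seq nat) s y x : y \in s -> x \in g y -> x \in flatten (map g s).
Proof.
elim: s => //= z s IH; rewrite in_cons => /orP [/eqP ->|h] hx; rewrite mem_cat ?hx //.
by rewrite IH ?orbT.
Qed.

Lemma le_foldr_max x s : x \in s -> x <= foldr maxn 0 s.
Proof.
elim: s => //= y s IH; rewrite in_cons => /orP [/eqP ->|h]; first exact: leq_maxl.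
exact: leq_trans (IH h) (leq_maxr _ _).
Qed.

Lemma foldr_max_mem s : foldr maxn 0 s = 0 \/ foldr maxn 0 s \in s.
Proof.
elim: s => [|y s IH] /=; first by left.
rewrite in_cons; case: (leqP y (foldr maxn 0 s)) => h.
  case: IH => [e|h2]; last by right; rewrite h2 orbT.
  by left.
by right; rewrite eqxx.
Qed.

Lemma nsize_gt0 x : 0 < nsize x.
Proof. by []. Qed.

Lemma size_le_sumn s : size s <= sumn (map nsize s).
Proof. by elim: s => //= x s IH; rewrite -add1n leq_add. Qed.

Lemma nsize_le_sumn x s : x \in s -> nsize x <= sumn (map nsize s).
Proof.
elim: s => //= y s IH; rewrite in_cons => /orP [/eqP ->|h]; first exact: leq_addr.
exact: leq_trans (IH h) (leq_addl _ _).
Qed.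

Lemma sumn_flat_map A (h : nat -> nat) (g : A -> seq nat) s :
  sumn (map h (flatten (map g s))) = sumn (map (fun y => sumn (map h (g y))) s).
Proof. by elim: s => //= y s IH; rewrite map_cat sumn_cat IH. Qed.

Lemma size_flatten_map A (g : A -> seq nat) s :
  size (flatten (map g s)) = sumn (map (fun y => size (g y)) s).
Proof. by elim: s => //= y s IH; rewrite size_cat IH. Qed.

Lemma sumn_le A (f g : A -> nat) s : (forall x, List.In x s -> f x <= g x) ->
  sumn (map f s) <= sumn (map g s).
Proof.
elim: s => //= y s IH h; apply: leq_add; first by apply: h; left.
by apply: IH => x hx; apply: h; right.
Qed.

Lemma sumn_le_const A (f : A -> nat) s K : (forall x, List.In x s -> f x <= K) ->
  sumn (map f s) <= size s * K.
Proof.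
elim: s => //= y s IH h; rewrite mulSn; apply: leq_add; first by apply: h; left.
by apply: IH => x hx; apply: h; right.
Qed.

Lemma nsize_le x k : x < 2 ^ k -> 0 < k -> nsize x <= k.
Proof.
rewrite /nsize => hx hk; case: (posnP x) => [->|x0]; first by rewrite trunc_log0.
have := trunc_logP (isT : 1 < 2) x0 => h.
by rewrite -(ltn_exp2l _ _ (isT : 1 < 2)); apply: leq_ltn_trans h hx.
Qed.

Lemma lt_nsize x : x < 2 ^ nsize x.
Proof. exact: trunc_log_ltn. Qed.

Lemma nsize_le_succ x : nsize x <= x.+1.
Proof.
apply: nsize_le => //; apply: leq_trans (ltn_expl x (isT : 1 < 2)) _.
by rewrite leq_exp2l.
Qed.

Definition tcs (t : term) : seq nat := if t is TConst k then [:: k] else [::].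
Definition acs (a : atom) : seq nat := flatten (map tcs (atom_terms a)).
Definition ics (c : ic) : seq nat := flatten (map acs (ic_body c ++ ic_head c)).

Lemma tcs_size t : sumn (map nsize (tcs t)) <= term_size t.
Proof. by case: t => [i|k] //=; rewrite addn0. Qed.

Lemma acs_size a : sumn (map nsize (acs a)) <= atom_size a.
Proof.
rewrite /acs sumn_flat_map; case: a => [p ts|s t|s t] /=.
- have := @sumn_le _ (fun y => sumn (map nsize (tcs y))) term_size ts (fun t _ => tcs_size t).
  lia.
- by rewrite addn0; apply: leqW; apply: leq_add; apply: tcs_size.
- by rewrite addn0; apply: leqW; apply: leq_add; apply: tcs_size.
Qed.

Lemma ics_size c : sumn (map nsize (ics c)) <= ic_size c.
Proof.
rewrite /ics sumn_flat_map.
have := @sumn_le _ (fun y => sumn (map nsize (acs y))) atom_size (ic_body c ++ ic_head c) (fun a _ => acs_size a).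
rewrite !map_cat !sumn_cat /ic_size; lia.
Qed.

Lemma leq_expr m n e : m <= n -> m ^ e <= n ^ e.
Proof. by move=> h; elim: e => // e IH; rewrite !expnS leq_mul. Qed.

Lemma peval_mono k n : peval (rcons (nseq k 0) 1) n = n ^ k.
Proof. by elim: k => [|k IH] /=; [rewrite muln0|rewrite IH expnS]. Qed.

Lemma pow_succ_bound N k : N.+1 ^ k <= 2 ^ k * (N ^ k + 1).
Proof.
case: (posnP N) => [->|N0].
  by rewrite exp1n muln_gt0 expn_gt0 addn1.
apply: (@leq_trans ((2 * N) ^ k)); first by apply: leq_expr; lia.
by rewrite expnMn leq_mul // leq_addr.
Qed.

Lemma final_arith np A N m X : m <= 3 * N ->
  X <= np * m.+1 ^ A * (np + A * N.+2).+1 ->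
  X <= (np * 3 ^ A * (np + 2 * A + 1) * 2 ^ A.+1) * N ^ A.+1
        + np * 3 ^ A * (np + 2 * A + 1) * 2 ^ A.+1.
Proof.
move=> hm hX.
have h1 : m.+1 ^ A <= 3 ^ A * N.+1 ^ A by rewrite -expnMn leq_expr //; lia.
have h2 : (np + A * N.+2).+1 <= (np + 2 * A + 1) * N.+1 by nia.
have h3 := pow_succ_bound N A.+1.
apply: (leq_trans hX).
apply: (@leq_trans (np * (3 ^ A * N.+1 ^ A) * ((np + 2 * A + 1) * N.+1))).
  by rewrite leq_mul // leq_mul.
apply: (@leq_trans (np * 3 ^ A * (np + 2 * A + 1) * (2 ^ A.+1 * (N ^ A.+1 + 1)))).
  have -> : np * (3 ^ A * N.+1 ^ A) * ((np + 2 * A + 1) * N.+1)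
       = np * 3 ^ A * (np + 2 * A + 1) * N.+1 ^ A.+1.
    rewrite expnSr; nia.
  by rewrite leq_mul.
nia.
Qed.

Theorem proposition6 (np : nat) (ar : nat -> nat) :
  exists (pol : seq nat) (C : nat),
  forall (D E : seq fact) (eta : seq ic),
    (forall f, f \in D -> wf_fact np ar f) ->
    (forall f, f \in E -> wf_fact np ar f) ->
    (forall c, Stdlib.Lists.List.In c eta -> wf_ic np ar c) ->
    consistent D E eta ->
    exists V : seq fact,
      possible_world_ic D E eta (of_seq V) /\
      facts_size V <= C * peval pol (db_size D E + eta_size eta) + C.
Proof.
pose A := foldr maxn 0 (map ar (iota 0 np)).
have arA : forall p, p < np -> ar p <= A.
  by move=> p pn; apply: le_foldr_max; apply: map_f; rewrite mem_iota.
exists (rcons (nseq A.+1 0) 1), (np * 3 ^ A * (np + 2 * A + 1) * 2 ^ A.+1).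
move=> D E eta wfD wfE wfeta [W [[Wdef [Wcov Wsub]] Wsat]].
pose cov b := epsilon (inhabits ((0, [::]) : fact)) (fun w => W w /\ prec b w).
pose exf c := epsilon (inhabits (fun _ : nat => 0)) (sat_with W c).
have Hcov0 : forall b, b \in D -> W (cov b) /\ prec b (cov b).
  move=> b bD.
  have [w Ww bw] := Wcov b (ex_intro2 _ _ b bD (prec_refl b)).
  exact: (epsilon_spec (inhabits ((0, [::]) : fact)) (fun w => W w /\ prec b w) (ex_intro _ w (conj Ww bw))).
have Hex : forall c, List.In c eta -> sat_with W c (exf c).
  by move=> c ceta; exact: (epsilon_spec _ _ (Wsat c ceta)).
pose Kl := flatten (map snd D) ++ flatten (map snd E) ++ flatten (map ics eta).
pose exvals := flatten (map (fun c => map (exf c) (iota 0 (ic_nx c))) eta).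
pose covvals := flatten (map (fun b => (cov b).2) D).
pose dom := filter (fun x => x != 0) (Kl ++ exvals ++ covvals).
pose B := foldr maxn 0 Kl.
have indom : forall x, x != 0 -> x \in Kl ++ exvals ++ covvals -> x \in dom.
  by move=> x x0 h; rewrite mem_filter x0.
have Hcov : forall b, b \in D -> W (cov b) /\ prec b (cov b) /\
    forall x, x \in (cov b).2 -> x \in dom.
  move=> b bD; have [Wc bc] := Hcov0 b bD; split=> //; split=> // x xc.
  apply: indom; first exact: Wdef Wc _ xc.
  by rewrite !mem_cat (flat_mem' (g := fun b => (cov b).2) bD xc) !orbT.
have Hexd : forall c i, List.In c eta -> i < ic_nx c -> exf c i \in dom.
  move=> c i ceta hi; apply: indom; first by rewrite -lt0n; exact: (Hex c ceta).1.
  rewrite !mem_cat (flat_mem (g := fun c => map (exf c) (iota 0 (ic_nx c))) ceta) ?orbT //.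
  by apply: map_f; rewrite mem_iota.
have HDE : forall b, b \in D ++ E -> forall x, x \in b.2 -> x <= B /\ (x != 0 -> x \in dom).
  move=> b bDE x xb.
  have xK : x \in Kl.
    rewrite !mem_cat; move: bDE; rewrite mem_cat => /orP [bD|bE].
      by rewrite (flat_mem' (g := snd) bD xb).
    by rewrite (flat_mem' (g := snd) bE xb) orbT.
  split; first exact: le_foldr_max.
  by move=> x0; apply: indom x0 _; rewrite mem_cat xK.
have Hcst : forall c, List.In c eta -> forall a, List.In a (ic_body c ++ ic_head c) ->
     forall k, List.In (TConst k) (atom_terms a) -> k <= B /\ k \in dom.
  move=> c ceta a aH k hk.
  have kK : k \in Kl.
    rewrite !mem_cat (flat_mem (g := ics) ceta) ?orbT //.
    apply: (flat_mem (g := acs) aH).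
    by apply: (flat_mem (g := tcs) hk); rewrite mem_head.
  split; first exact: le_foldr_max.
  apply: indom; last by rewrite mem_cat kK.
  have := atom_ok_terms ((wfeta c ceta).1 a aH) hk.
  by rewrite /= lt0n.
have Hpos : forall x, x \in dom -> 0 < x.
  by move=> x; rewrite mem_filter lt0n => /andP [].
have Hpw := construction (cov:=cov) (exf:=exf) (B:=B) (dom:=dom) wfD wfeta
   (conj Wdef (conj Wcov Wsub)) Hex Hcov Hexd HDE Hcst Hpos.
eexists; split; first exact: Hpw.
set V' := map _ _.
set N := db_size D E + eta_size eta.
have SK : sumn (map nsize Kl) <= N.
  rewrite /Kl !map_cat !sumn_cat !sumn_flat_map.
  have h1 : sumn [seq sumn [seq nsize i | i <- y.2] | y <- D] <= sumn (map fact_size D).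
    by apply: sumn_le => b _; exact: leq_trans (leq_addl _ _) (leqnSn _).
  have h2 : sumn [seq sumn [seq nsize i | i <- y.2] | y <- E] <= sumn (map fact_size E).
    by apply: sumn_le => b _; exact: leq_trans (leq_addl _ _) (leqnSn _).
  have h3 : sumn [seq sumn [seq nsize i | i <- ics y] | y <- eta] <= sumn (map ic_size eta).
    by apply: sumn_le => c _; exact: ics_size.
  rewrite /N /db_size /facts_size /eta_size addnA; apply: leq_add; first apply: leq_add.
  - exact: h1.
  - exact: h2.
  - exact: h3.
have SX : size exvals <= eta_size eta.
  rewrite size_flatten_map; apply: sumn_le => c _.
  by rewrite size_map size_iota /ic_size; lia.
have SC : size covvals <= facts_size D.
  rewrite size_flatten_map; apply: sumn_le => b /In_mem bD.
  have [_ [[_ [sz _]] _]] := Hcov b bD; rewrite -sz.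
  apply: leq_trans (size_le_sumn _) _; rewrite /fact_size; lia.
have Sm : size dom <= 3 * N.
  rewrite size_filter; apply: leq_trans (count_size _ _) _.
  have hK := size_le_sumn Kl.
  rewrite (size_cat Kl) (size_cat exvals).
  have [e1 e2] : eta_size eta <= N /\ facts_size D <= N by rewrite /N /db_size; lia.
  lia.
have SB : B < 2 ^ N.
  case: (foldr_max_mem Kl) => [e|h]; first by rewrite /B e expn_gt0.
  apply: leq_trans (lt_nsize B) _; rewrite leq_exp2l //.
  exact: leq_trans (nsize_le_sumn h) SK.
have SN : N < 2 ^ N := ltn_expl N (isT : 1 < 2).
have Kb : forall y, y <= B + size dom -> nsize y <= N.+2.
  move=> y hy; apply: nsize_le => //; rewrite !expnS; lia.
have Hf : forall a, List.In a V' -> fact_size a <= (np + A * N.+2).+1.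
  move=> a /In_mem /mapP [f]; rewrite mem_filter => /andP [_ /mem_allfacts [pn sz fd]] ->.
  rewrite /fact_size /ren /=.
  have h1 : nsize f.1 <= np := leq_trans (nsize_le_succ _) pn.
  have h2 : sumn (map nsize (map (rho B dom) f.2)) <= size f.2 * N.+2.
    rewrite -map_comp; apply: sumn_le_const => x _; apply: Kb; exact: rho_bound.
  rewrite sz in h2.
  have h4 : ar f.1 * N.+2 <= A * N.+2 by rewrite leq_mul // arA.
  by rewrite ltnS; apply: leq_add h1 (leq_trans h2 h4).
have Hs : size V' <= np * (size dom).+1 ^ A.
  rewrite size_map size_filter; apply: leq_trans (count_size _ _) _.
  rewrite /allfacts size_allpairs_dep.
  have := @sumn_le_const _ (fun p => size (tup dom (ar p))) (iota 0 np) ((size dom).+1 ^ A).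
  rewrite size_iota; apply => p /In_mem; rewrite mem_iota /= => pn.
  rewrite size_tup; apply: (@leq_trans ((size dom).+1 ^ ar p)); first exact: leq_expr.
  by rewrite leq_pexp2l // arA.
have Hfs : facts_size V' <= size V' * (np + A * N.+2).+1 by apply: sumn_le_const.
rewrite peval_mono.
apply: final_arith Sm _.
apply: leq_trans Hfs _; rewrite leq_mul //.
Qed.
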